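(* Let $n\ge1$ and let $R$ be a rook placement in $2\delta_{n-1}$. For $0\le i\le n-1$, let $R_i$ be the rook placement in $2\delta_i$ obtained by keeping only the top $i$ rows of $R$ (with their dots); so $R_0$ is empty and $R_{n-1}=R$. Then $(d(R_0),d(R_1),\dots,d(R_{n-1}))$ is an $n$-chain of Dyck shapes, i.e. $d(R_0)\sqsubset d(R_1)\sqsubset\cdots\sqsubset d(R_{n-1})$ with $d(R_{i})$ of length $2i+2$. Moreover, the map $R\mapsto (d(R_0),\dots,d(R_{n-1}))$ is a bijection between rook placements in $2\delta_{n-1}$ and $n$-chains of Dyck shapes.
   Context: The double staircase $2\delta_n$ is the Young diagram (French convention: rows drawn bottom to top, left-justified) with row lengths $2n,2n-2,\dots,2$ from bottom to top; its columns are numbered $1,\dots,2n$ from left to right; $2\delta_0$ is empty. Note that the top $i$ rows of $2\delta_{n-1}$ form a copy of $2\delta_i$. A rook placement in $2\delta_n$ is a set of dots in cells of $2\delta_n$ with exactly one dot per row and at most one per column. For such $R$, $d(R)$ is the word $w_1\cdots w_{2n+2}$ over $\{\nearrow,\searrow\}$ with $w_1=\nearrow$, $w_{2n+2}=\searrow$, and for $2\le i\le 2n+1$, $w_i=\nearrow$ iff column $i-1$ of $R$ contains a dot (so $d(R_0)=\nearrow\searrow$). A Dyck path of length $2m$ is a lattice path from $(0,0)$ to $(2m,0)$ with steps $\nearrow=(1,1)$, $\searrow=(1,-1)$ never going below the $x$-axis; write $P(x)$ for its height at abscissa $x$. A cell is a point $(a,b)\in\mathbb{Z}^2$ with $b\ge0$,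 $a+b$ even (viewed as the tilted square with vertices $(a,b),(a+1,b\pm1),(a+2,b)$). The Dyck shape of $P$ (length $2m$) is $S(P)=\{(a,b): b\ge0,\ a+b\text{ even},\ 0\le a\le 2m-2,\ b+1\le P(a+1)\}$. Cells are adjacent if they differ by $(\pm1,\pm1)$. A ribbon is a nonempty set of cells, connected for adjacency, containing no four cells $(a,b),(a+1,b+1),(a+1,b-1),(a+2,b)$. For Dyck paths $D$ of length $2m$ and $E$ of length $2m+2$, $D\sqsubset E$ means $S(D)\subseteq S(E)$ and $S(E)\setminus S(D)$ is a ribbon. An $n$-chain of Dyck shapes is a sequence $D_1\sqsubset D_2\sqsubset\cdots\sqsubset D_n$ of Dyck paths with $D_i$ of length $2i$. *)

(* Defs.v *)
From mathcomp Require Import all_boot all_order all_algebra.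
Set Implicit Arguments. Unset Strict Implicit. Unset Printing Implicit Defensive.
Import Order.TTheory GRing.Theory Num.Theory.

(* Steps: true = up-step (1,1), false = down-step (1,-1). *)

(** Rows are indexed from the TOP: row k (k = 0..n-1, from the top) has length
    2(k+1) (so the bottom row, k = n-1, has length 2n).  A rook placement is
    stored as the sequence s of the columns (numbered 1..) of the dots, s`_k
    being the column of the dot in row k from the top.  Exactly one dot per row
    is built in; "at most one per column" is [uniq s]. *)
Definition rook_placement (n : nat) (s : seq nat) : Prop :=
  [/\ size s = n, uniq s &
      forall k, k < n -> 1 <= nth 0 s k <= (k.+1).*2].

Definition top_rows (i : nat) (s : seq nat) : seq nat := take i s.

Definition dword (s : seq nat) : seq bool :=
  true :: [seq (c \in s) | c <- iota 1 (size s).*2] ++ [:: false].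

Local Open Scope ring_scope.

Definition height (P : seq bool) (x : nat) : int :=
  \sum_(b <- take x P) (if b then 1 else -1).

Definition dyck (m : nat) (P : seq bool) : Prop :=
  [/\ size P = (m.*2)%N,
      forall x, (x <= m.*2)%N -> 0 <= height P x &
      height P (m.*2) = 0].

Definition in_shape (P : seq bool) (c : int * int) : bool :=
  let: (a, b) := c in
  [&& 0 <= b, ~~ odd (absz (a + b)), 0 <= a, a <= (size P)%:Z - 2 &
      b + 1 <= height P (absz (a + 1))].

Definition cell_adj (c c' : int * int) : bool :=
  (`|c.1 - c'.1| == 1%N) && (`|c.2 - c'.2| == 1%N).

Definition ribbon (X : pred (int * int)) : Prop :=
  [/\ exists c, X c,
      (forall x y, X x -> X y ->
         exists p : seq (int * int), [&& path cell_adj x p, all X p & last x p == y]) &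
      forall a b, ~ [&& X (a, b), X (a + 1, b + 1), X (a + 1, b - 1) & X (a + 2, b)]].

Definition dyck_cover (D E : seq bool) : Prop :=
  (forall c, in_shape D c -> in_shape E c) /\
  ribbon (fun c => in_shape E c && ~~ in_shape D c).

(** An n-chain of Dyck shapes D_1 ⊏ ... ⊏ D_n, stored as the list
    [:: D_1; ...; D_n] (so the i-th entry, 0-indexed, has length 2(i+1)). *)
Definition dyck_chain (n : nat) (C : seq (seq bool)) : Prop :=
  [/\ size C = n,
      forall i, (i < n)%N -> dyck i.+1 (nth [::] C i) &
      forall i, (i.+1 < n)%N -> dyck_cover (nth [::] C i) (nth [::] C i.+1)].

Definition rook_to_chain (n : nat) (s : seq nat) : seq (seq bool) :=
  [seq dword (top_rows i s) | i <- iota 0 n].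

(* Main.v *)
Require Import Defs.
From mathcomp Require Import all_boot all_order all_algebra zify.
Import Order.TTheory GRing.Theory Num.Theory.

Lemma h0 P : height P 0 = 0%R.
Proof. by rewrite /height take0 big_nil. Qed.

Lemma hnil x : height [::] x = 0%R.
Proof. by rewrite /height big_nil. Qed.

Lemma hcons b P x : height (b :: P) x.+1 = ((if b then 1 else -1) + height P x)%R.
Proof. by rewrite /height /= big_cons. Qed.

Lemma hstep P x : height P x.+1 =
  (height P x + (if (x < size P)%N then (if nth false P x then 1 else -1) else 0))%R.
Proof.
elim: P x => [|b P IH] [|x]; rewrite ?hcons ?hnil ?h0 //=.
- by rewrite add0r addr0.
- by rewrite IH ltnS addrA.
Qed.

Lemma hpar P x : (x <= size P)%N -> exists k : int, (height P x + x%:Z = 2 * k)%R.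
Proof.
elim: x => [|x IH] Hx; first by exists 0%R; rewrite h0.
have [k Hk] := IH (ltnW Hx).
rewrite hstep Hx; case: ifP => _.
- exists (k+1)%R; lia.
- exists k; lia.
Qed.

Lemma hbeyond P x : (size P <= x)%N -> height P x = height P (size P).
Proof. by move=> H; rewrite /height take_oversize // take_size. Qed.

Lemma hlip P x : (height P x - 1 <= height P x.+1 <= height P x + 1)%R.
Proof. rewrite hstep; case: ifP => _; [case: ifP => _|]; lia. Qed.

Lemma nth_h P x : (x < size P)%N ->
  nth false P x = (height P x.+1 == height P x + 1)%R.
Proof. move=> H; rewrite hstep H; case: ifP => _; lia. Qed.

Lemma heq P Q : size P = size Q ->
  (forall x, (x <= size P)%N -> height P x = height Q x) -> P = Q.
Proof.
move=> Hs Hh; apply: (eq_from_nth (x0 := false) Hs) => x Hx.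
rewrite !nth_h -?Hs // !Hh //; exact: ltnW.
Qed.

Lemma hset P j x : (j < size P)%N -> nth false P j = false ->
  height (set_nth false P j true) x = (height P x + (if (j < x)%N then 2 else 0))%R.
Proof.
elim: P j x => [|b P IH] j x //= Hj Hn.
case: x => [|x]; first by rewrite !h0.
case: j Hj Hn => [|j] Hj Hn /=.
- move: Hn => /= ->; rewrite !hcons /=; lia.
- by rewrite !hcons IH // ltnS addrA.
Qed.

Lemma hcat P Q x : height (P ++ Q) x =
  if (x <= size P)%N then height P x else (height P (size P) + height Q (x - size P))%R.
Proof.
elim: P x => [|b P IH] x /=.
- rewrite hnil subn0; case: x => [|x] //=; rewrite ?h0; lia.
- case: x => [|x]; first by rewrite !h0.
  rewrite !hcons IH ltnS subSS; by case: b; case: ifP => _; rewrite ?addrA.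
Qed.

Lemma hF D m x : size D = m.*2 -> height D m.*2 = 0%R ->
  height (D ++ [:: false; false]) x =
  if (x <= m.*2)%N then height D x else if x == m.*2.+1 then (-1)%R else (-2)%R.
Proof.
move=> Hs H0; rewrite hcat Hs; case: ifP => // Hx.
rewrite H0 add0r.
have [d ->] : exists d, x = (m.*2 + d.+1)%N by exists (x - m.*2).-1; lia.
rewrite addKn; case: d => [|[|d]].
- by rewrite addn1 eqxx hcons h0.
- have -> : (m.*2 + 2 == m.*2.+1) = false by lia.
  by rewrite !hcons h0.
- have -> : (m.*2 + d.+3 == m.*2.+1) = false by lia.
  rewrite !hcons hbeyond //= ?h0; lia.
Qed.

Lemma size_dword s : size (dword s) = (size s).*2.+2.
Proof. by rewrite /dword /= size_cat size_map size_iota addn1. Qed.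

Lemma nth_dword s x : nth false (dword s) x =
  (x == 0) || ((0 < x <= (size s).*2) && (x \in s)).
Proof.
case: x => [|x] //=; rewrite nth_cat size_map size_iota.
case: ifP => H.
- by rewrite (nth_map 0) ?size_iota // nth_iota // add1n H.
- by case: (x - (size s).*2)%N => [|[]].
Qed.

Lemma dword_rcons (s : seq nat) c : (forall y, y \in s -> 0 < y <= (size s).*2) ->
  c \notin s -> 0 < c <= (size s).*2.+2 ->
  dword (rcons s c) = set_nth false (dword s ++ [:: false; false]) c true.
Proof.
move=> Hs Hc /andP[Hc0 Hc1].
have Hsz : size (set_nth false (dword s ++ [:: false; false]) c true) = (size s).*2.+4.
  rewrite size_set_nth size_cat size_dword /=; lia.
apply: (eq_from_nth (x0 := false)); first by rewrite Hsz size_dword size_rcons.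
have HF y : nth false (dword s ++ [:: false; false]) y = nth false (dword s) y.
  rewrite nth_cat; case: ifP => // /negbT; rewrite -leqNgt => H.
  rewrite [RHS]nth_default //; case: (y - _)%N => [|[|n]] //=; by case: n.
move=> x; rewrite size_dword size_rcons => Hx.
rewrite nth_set_nth /= HF !nth_dword size_rcons mem_rcons in_cons.
case: (eqVneq x c) => [->|Hxc] /=; first by rewrite andbT; lia.
case: (boolP (x \in s)) => Hxs; rewrite ?andbT ?andbF ?orbF //.
have := Hs _ Hxs; lia.
Qed.

Lemma in_shape_neg P a b : in_shape P (Negz a, b) = false.
Proof. by rewrite /in_shape; case: (0 <= b)%R; case: (~~ odd _). Qed.

Lemma in_shapeP P (a : nat) b : in_shape P (Posz a, b) =
  [&& (0 <= b)%R, ~~ odd (absz (a%:Z + b)%R), ((a%:Z <= (size P)%:Z - 2)%R)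
     & (b + 1 <= height P a.+1)%R].
Proof.
rewrite /in_shape; have -> : absz (a%:Z + 1)%R = a.+1 by lia.
by rewrite lez_nat.
Qed.

Fixpoint upl (f : nat -> int) k d : seq (int * int) :=
  if d is d'.+1 then (Posz k.+1, f k.+1) :: upl f k.+1 d' else [::].
Fixpoint downl (f : nat -> int) k d : seq (int * int) :=
  if d is d'.+1 then (Posz k.-1, f k.-1) :: downl f k.-1 d' else [::].

Lemma conn (X : pred (int * int)) (f : nat -> int) lo hi :
  (forall k, (lo <= k < hi)%N -> absz (f k - f k.+1)%R = 1%N) ->
  (forall k, (lo <= k <= hi)%N -> X (Posz k, f k)) ->
  forall k1 k2, (lo <= k1 <= hi)%N -> (lo <= k2 <= hi)%N ->
  exists p, [&& path cell_adj (Posz k1, f k1) p, all X p &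
                last (Posz k1, f k1) p == (Posz k2, f k2)].
Proof.
move=> Hf HX k1 k2 H1 H2.
case: (leqP k1 k2) => Hk.
- exists (upl f k1 (k2 - k1)).
  have [d Hd] : exists d, k2 = (k1 + d)%N by exists (k2 - k1)%N; lia.
  rewrite Hd addKn; rewrite Hd in H2.
  elim: d k1 H1 H2 {Hk Hd} => [|d IH] k1 H1 H2 /=; first by rewrite addn0.
  rewrite addnS -addSn.
  have /and3P[-> -> ->] := IH k1.+1 ltac:(lia) ltac:(lia).
  rewrite HX ?andbT; last by lia.
  rewrite /cell_adj /=.
  have := Hf k1 ltac:(lia); lia.
- exists (downl f k1 (k1 - k2)).
  have [d Hd] : exists d, k1 = (k2 + d)%N by exists (k1 - k2)%N; lia.
  rewrite Hd addnC addnK; rewrite Hd in H1.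
  elim: d k2 H1 H2 {Hk Hd} => [|d IH] k2 H1 H2 /=; first by rewrite ?addn0.
  have /and3P[-> -> ->] := IH k2 ltac:(lia) ltac:(lia).
  rewrite HX ?andbT; last by lia.
  rewrite /cell_adj /=.
  rewrite addSn. have := Hf (d + k2)%N ltac:(lia). lia.
Qed.

Lemma flipA D m j : (0 < m)%N -> dyck m D -> (0 < j <= m.*2)%N ->
  nth false (D ++ [:: false; false]) j = false ->
  dyck m.+1 (set_nth false (D ++ [:: false; false]) j true) /\
  dyck_cover D (set_nth false (D ++ [:: false; false]) j true).
Proof.
move=> Hm [HsD HpD H0D] /andP[Hj0 Hj1] Hn.
set F := D ++ _; set E := set_nth _ _ _ _.
have HsF : size F = m.*2.+2 by rewrite size_cat HsD addn2.
have HE x : height E x = ((if (x <= m.*2)%N then height D x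
     else if x == m.*2.+1 then -1 else -2) + (if (j < x)%N then 2 else 0))%R.
  rewrite hset ?HsF //; [by rewrite /F (@hF D m x HsD H0D) | lia].
have HsE : size E = (m.+1).*2 by rewrite size_set_nth HsF; lia.
have Dpar x : (x <= m.*2)%N -> exists t : int, (height D x + x%:Z = 2 * t)%R.
  by move=> Hx; apply: hpar; rewrite HsD.
have dyE : dyck m.+1 E.
  split => //.
  - move=> x Hx; rewrite HE; case: ifP => H1; [|case: ifP => H2];
      case: ifP => H3; try (have := HpD x H1); lia.
  - rewrite HE; case: ifP => H1; [|case: ifP => H2]; case: ifP => H3; lia.
split => //.
pose f k := ((if (k.+1 <= m.*2)%N then height D k.+1 else -1) + 1)%R.
have Xc c : (in_shape E c && ~~ in_shape D c) <->
            exists k, c = (Posz k, f k) /\ (j <= k <= m.*2)%N.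
  case: c => [[k|k] b]; last by rewrite in_shape_neg; split => // [[k' []]].
  rewrite !in_shapeP HsE HsD.
  case: (leqP k.+1 m.*2) => Hk.
  - have [t Ht] := Dpar _ Hk; have Hp := HpD _ Hk.
    have Hz : (k.+1 < m.*2)%N \/ height D k.+1 = 0%R.
      by case: (ltnP k.+1 m.*2) => H; [left|right; have -> : k.+1 = m.*2 by lia].
    have Hfk : f k = (height D k.+1 + 1)%R by rewrite /f Hk.
    rewrite HE Hk; split.
    + case/andP => /and4P[H1 H2 H3 H4] H5; exists k; rewrite Hfk; split.
      * congr pair; move: H5 H4; case: ifP => H6; lia.
      * move: H5 H4; case: ifP => H6; lia.
    + case=> k' [[<- ->] /andP[H1 H2]]; rewrite Hfk ifT; last by lia.
      lia.
  - have Hfk : f k = 0%R by rewrite /f ifF //; lia.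
    rewrite HE; have -> : (k.+1 <= m.*2)%N = false by lia.
    case: (eqVneq k.+1 m.*2.+1) => Hk2; rewrite ifT; try lia; split.
    + case/andP => /and4P[H1 H2 H3 H4] H5; exists k; rewrite Hfk; split; [congr pair|]; lia.
    + case=> k' [[<- ->] /andP[H1 H2]]; rewrite Hfk; lia.
    + case/andP => /and4P[H1 H2 H3 H4] H5; lia.
    + case=> k' [[<- ->] /andP[H1 H2]]; lia.
split.
  case=> [[k|k] b]; last by rewrite in_shape_neg.
  rewrite !in_shapeP HsE HsD => /and4P[H1 H2 H3 H4].
  rewrite H1 H2 /= HE ifT; last by lia.
  apply/andP; split; first lia.
  case: ifP => _; lia.
split.
- exists (Posz m.*2, f m.*2); apply/Xc; exists m.*2; split => //; lia.
- move=> x y /Xc [k1 [-> Hk1]] /Xc [k2 [-> Hk2]].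
  apply: (@conn _ _ j m.*2) => //.
  + move=> k Hk; rewrite /f.
    case: (ltnP k.+2 m.*2.+1) => H.
    * rewrite ifT ?ifT; try lia.
      have := hstep D k.+1; rewrite HsD ifT; last by lia.
      case: ifP => _ ->; lia.
    * rewrite ifT ?ifF; try lia.
      have -> : k.+1 = m.*2 by lia.
      rewrite H0D; lia.
  + by move=> k Hk; apply/Xc; exists k.
- move=> a b /and4P[_ /Xc [k1 [E1 _]] /Xc [k2 [E2 _]] _].
  case: E1 => Ha Hb; case: E2 => Ha2 Hb2; have Hk : k1 = k2 by lia.
  subst k2; lia.
Qed.

Lemma ivt (X : pred (int * int)) (t : int) p c :
  path cell_adj c p -> all X p -> (c.1 < t)%R -> (t < (last c p).1)%R ->
  exists2 d, X d & d.1 = t.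
Proof.
elim: p c => [|d p IH] c /=; first lia.
case/andP => /andP[Ha _] Hp /andP[Xd Xp] H1 H2.
case: (eqVneq d.1 t) => Hd; first by exists d.
apply: IH Xp _ H2 => //; lia.
Qed.

Lemma hstep1 P x : (x < size P)%N ->
  height P x.+1 = (height P x + 1)%R \/ height P x.+1 = (height P x - 1)%R.
Proof. move=> H; rewrite hstep H; case: ifP => _; [left|right] => //. Qed.

Lemma flipB D E m : (0 < m)%N -> dyck m D -> dyck m.+1 E -> dyck_cover D E ->
  exists j, [/\ (0 < j <= m.*2)%N, nth false (D ++ [:: false; false]) j = false &
    E = set_nth false (D ++ [:: false; false]) j true].
Proof.
move=> Hm [HsD HpD H0D] [HsE HpE H0E] [Hinc [_ Hconn Hdia]].
have Dpar x : (x <= m.*2)%N -> exists t : int, (height D x + x%:Z = 2 * t)%R.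
  by move=> Hx; apply: hpar; rewrite HsD.
have Epar x : (x <= m.+1.*2)%N -> exists t : int, (height E x + x%:Z = 2 * t)%R.
  by move=> Hx; apply: hpar; rewrite HsE.
have Dst x : (x < m.*2)%N -> height D x.+1 = (height D x + 1)%R \/ height D x.+1 = (height D x - 1)%R.
  by move=> Hx; apply: hstep1; rewrite HsD.
have Est x : (x < m.+1.*2)%N -> height E x.+1 = (height E x + 1)%R \/ height E x.+1 = (height E x - 1)%R.
  by move=> Hx; apply: hstep1; rewrite HsE.
have D1 : height D 1 = 1%R.
  have := Dst 0 ltac:(lia); have := HpD 1 ltac:(lia); rewrite h0; lia.
have E1 : height E 1 = 1%R.
  have := Est 0 ltac:(lia); have := HpE 1 ltac:(lia); rewrite h0; lia.
have Elast : height E m.*2.+1 = 1%R.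
  have := Est m.*2.+1 ltac:(lia); have := HpE m.*2.+1 ltac:(lia).
  have -> : m.*2.+2 = m.+1.*2 by lia. rewrite H0E; lia.
have Elast2 : height E m.*2 = 0%R \/ height E m.*2 = 2%R.
  have := Est m.*2 ltac:(lia); have := HpE m.*2 ltac:(lia); have := Epar m.*2 ltac:(lia).
  rewrite Elast; lia.
have ge x : (0 < x < m.*2)%N -> (height D x <= height E x)%R.
  move=> Hx; case: (lerP (height D x) 0) => Hd; first by have := HpE x ltac:(lia); lia.
  have := Hinc (Posz x.-1, height D x - 1)%R.
  have [t Ht] := Dpar x ltac:(lia).
  rewrite !in_shapeP HsD HsE; have -> : x.-1.+1 = x by lia.
  move=> H; have /and4P[_ _ _ H4] := H ltac:(apply/and4P; split; lia).
  lia.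
have le x : (1 < x < m.*2)%N -> (height E x <= height D x + 2)%R.
  move=> Hx; case: (lerP (height E x) (height D x + 2)) => // Hlt; exfalso.
  have [y Hy] : exists y, x = y.+2 by exists x.-2; lia.
  subst x.
  have [t Ht] := Dpar y.+2 ltac:(lia); have [t' Ht'] := Epar y.+2 ltac:(lia).
  have := Est y.+1 ltac:(lia); have := Est y.+2 ltac:(lia).
  have := Dst y.+1 ltac:(lia); have := Dst y.+2 ltac:(lia).
  have := HpD y.+2 ltac:(lia).
  move=> S0 S1 S2 S3 S4.
  apply: (Hdia (Posz y) (height D y.+2 + 2)%R); cbv beta.
  have -> : (Posz y + 1)%R = Posz y.+1 by lia.
  have -> : (Posz y + 2)%R = Posz y.+2 by lia.
  rewrite !in_shapeP HsD HsE.
  lia.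
have g01 x : (0 < x <= m.*2)%N ->
    height E x = height D x \/ height E x = (height D x + 2)%R.
  move=> Hx.
  case: (eqVneq x 1) => [->|H1]; first by left; rewrite D1 E1.
  case: (eqVneq x m.*2) => [->|H2]; first by rewrite H0D.
  have := ge x ltac:(lia); have := le x ltac:(lia).
  have [t Ht] := Dpar x ltac:(lia); have [t' Ht'] := Epar x ltac:(lia).
  lia.
have up x : (0 < x < m.*2)%N -> height E x = (height D x + 2)%R ->
    height E x.+1 = (height D x.+1 + 2)%R.
  move=> Hx Hg; case: (g01 x.+1 ltac:(lia)) => // Heq; exfalso.
  pose c1 := (Posz x.-1, height D x + 1)%R.
  pose c2 : int * int := (Posz m.*2, 0%R).
  have [t Ht] := Dpar x ltac:(lia).
  have Hpx := HpD x ltac:(lia).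
  have X1 : in_shape E c1 && ~~ in_shape D c1.
    rewrite /c1 !in_shapeP HsD HsE; have -> : x.-1.+1 = x by lia.
    lia.
  have X2 : in_shape E c2 && ~~ in_shape D c2.
    rewrite /c2 !in_shapeP HsD HsE Elast; lia.
  have [p /and3P[Hp Hall /eqP Hlast]] := Hconn c1 c2 X1 X2.
  have [[a b] Xd Ha] := @ivt _ (Posz x) p c1 Hp Hall ltac:(rewrite /c1 /=; lia)
    ltac:(rewrite Hlast /c2 /=; lia).
  move: Ha => /= Ha; subst a; move: Xd; rewrite !in_shapeP HsD HsE Heq.
  have Hz : (x.+1 < m.*2)%N \/ height D x.+1 = 0%R.
    by case: (ltnP x.+1 m.*2) => H; [left|right; have -> : x.+1 = m.*2 by lia].
  lia.
have exP : exists k, (m.*2 <= k)%N || (height E k.+1 == height D k.+1 + 2)%R.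
  by exists m.*2; rewrite leqnn.
case: (find_ex_minn exP) => j Pj Jmin.
have Hj2 : (j <= m.*2)%N by apply: Jmin; rewrite leqnn.
have Hj1 : (0 < j)%N.
  move: Pj; case: (posnP j) => [->|//]; rewrite D1 E1; lia.
have g0 y : (0 < y <= j)%N -> height E y = height D y.
  move=> Hy; case: (boolP ((m.*2 <= y.-1)%N || (height E y.-1.+1 == height D y.-1.+1 + 2)%R)) => H.
    have := Jmin _ H; lia.
  move: H; have -> : y.-1.+1 = y by lia.
  have := g01 y ltac:(lia); lia.
have g2 y : (j < y <= m.*2)%N -> height E y = (height D y + 2)%R.
  elim: y => [|y IH] Hy; first lia.
  case: (eqVneq y j) => [Hyj|Hyj].
    subst y; move: Pj; lia.
  apply: up; [lia|]; apply: IH; lia.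
have Fh x : (x <= m.+1.*2)%N -> height E x =
    (height (D ++ [:: false; false]) x + (if (j < x)%N then 2 else 0))%R.
  move=> Hx; rewrite (@hF D m x HsD H0D).
  case: (posnP x) => [->|Hx0]; first by rewrite !h0.
  case: (leqP x j) => Hxj.
    rewrite g0 ?ifT ?addr0 //; lia.
  case: (leqP x m.*2) => Hxm; first by rewrite g2; lia.
  case: (eqVneq x m.*2.+1) => [->|Hx1]; first by rewrite Elast; lia.
  have -> : x = m.+1.*2 by lia.
  rewrite H0E; lia.
have Hn : nth false (D ++ [:: false; false]) j = false.
  rewrite nth_cat HsD; case: ltnP => Hjm.
    rewrite nth_h ?HsD //.
    have := g0 j ltac:(lia); have := g2 j.+1 ltac:(lia); have := Est j ltac:(lia); lia.
  by have -> : (j - m.*2 = 0)%N by lia.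
exists j; split => //; first lia.
apply: heq; first by rewrite size_set_nth size_cat HsD HsE /=; lia.
move=> x Hx; rewrite hset ?size_cat ?HsD /=; [|lia|by []].
by rewrite Fh // -HsE.
Qed.

Lemma rp_range k (s : seq nat) : rook_placement k s ->
  forall y, y \in s -> (0 < y <= k.*2)%N.
Proof.
case=> Hs Hu Hb y Hy.
have Hi : (index y s < k)%N by rewrite -Hs index_mem.
have := Hb _ Hi; rewrite nth_index //; lia.
Qed.

Lemma rp_take k (s : seq nat) i : rook_placement k s -> (i <= k)%N ->
  rook_placement i (take i s).
Proof.
case=> Hs Hu Hb Hi; split.
- by rewrite size_takel // Hs.
- exact: take_uniq.
- by move=> x Hx; rewrite nth_take //; apply: Hb; lia.
Qed.

Lemma nth_dword_ff (s : seq nat) y :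
  nth false (dword s ++ [:: false; false]) y = nth false (dword s) y.
Proof.
rewrite nth_cat; case: ifP => // /negbT; rewrite -leqNgt => H.
rewrite [RHS]nth_default //; case: (y - _)%N => [|[|n]] //=; by case: n.
Qed.

Lemma dyck1 : dyck 1 (dword [::]).
Proof.
split => //.
- move=> [|[|[|x]]] Hx //; rewrite ?h0 ?hcons ?h0 ?hnil //.
- by rewrite /= !hcons h0.
Qed.

Lemma rp_step k (s : seq nat) i : rook_placement k s -> (i < k)%N ->
  dword (take i.+1 s) =
    set_nth false (dword (take i s) ++ [:: false; false]) (nth 0 s i) true /\
  [/\ (0 < nth 0 s i <= i.+1.*2)%N &
    nth false (dword (take i s) ++ [:: false; false]) (nth 0 s i) = false].
Proof.
move=> Hr Hi; have [Hs Hu Hb] := Hr.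
have Hr' := @rp_take k s i Hr (ltnW Hi).
have Hr'' := @rp_take k s i.+1 Hr Hi.
have Hsi : size (take i s) = i by case: Hr'.
rewrite (take_nth 0); last by rewrite Hs.
have Hc : nth 0 s i \notin take i s.
  by case: Hr''; rewrite (take_nth 0) ?Hs // rcons_uniq => _ /andP[].
have Hcb := Hb _ Hi.
split.
- rewrite dword_rcons // Hsi; last by lia.
  by move=> y Hy; have := @rp_range i (take i s) Hr' y Hy.
- split => //.
  rewrite nth_dword_ff nth_dword (negbTE Hc) andbF orbF; lia.
Qed.

Lemma nth_rtc n (s : seq nat) i : (i < n)%N ->
  nth [::] (rook_to_chain n s) i = dword (take i s).
Proof. by move=> H; rewrite /rook_to_chain (nth_map 0) ?size_iota // nth_iota. Qed.

Lemma size_rtc n (s : seq nat) : size (rook_to_chain n s) = n.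
Proof. by rewrite size_map size_iota. Qed.

Lemma fwd k (s : seq nat) : rook_placement k s -> dyck_chain k.+1 (rook_to_chain k.+1 s).
Proof.
move=> Hr.
have Hd : forall i, (i <= k)%N -> dyck i.+1 (dword (take i s)).
  elim=> [|i IH] Hi; first by rewrite take0; exact: dyck1.
  have [-> [Hc Hn]] := @rp_step k s i Hr Hi.
  by have [] := @flipA _ i.+1 _ (ltn0Sn i) (IH (ltnW Hi)) Hc Hn.
split; first exact: size_rtc.
- by move=> i Hi; rewrite nth_rtc //; apply: Hd.
- move=> i Hi; rewrite !nth_rtc //; last by lia.
  have [-> [Hc Hn]] := @rp_step k s i Hr Hi.
  by have [] := @flipA _ i.+1 _ (ltn0Sn i) (Hd i (ltnW Hi)) Hc Hn.
Qed.

Lemma inj k (s1 s2 : seq nat) : rook_placement k s1 -> rook_placement k s2 ->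
  rook_to_chain k.+1 s1 = rook_to_chain k.+1 s2 -> s1 = s2.
Proof.
move=> H1 H2 He.
have Hw i : (i <= k)%N -> dword (take i s1) = dword (take i s2).
  by move=> Hi; rewrite -!(@nth_rtc k.+1) // He.
have [Hs1 Hu1 _] := H1; have [Hs2 Hu2 _] := H2.
apply: (eq_from_nth (x0 := 0)); first by rewrite Hs1 Hs2.
move=> i; rewrite Hs1 => Hi.
set c := nth 0 s1 i.
have [_ [Hc _]] := @rp_step k s1 i H1 Hi.
have Ht1 := @rp_take k s1 i.+1 H1 Hi.
have Ht1' := @rp_take k s1 i H1 (ltnW Hi).
have Ht2' := @rp_take k s2 i H2 (ltnW Hi).
have Hsz1 : size (take i.+1 s1) = i.+1 by case: Ht1.
have Hsz1' : size (take i s1) = i by case: Ht1'.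
have Hsz2' : size (take i s2) = i by case: Ht2'.
have Hsz2 : size (take i.+1 s2) = i.+1 by rewrite size_takel // Hs2.
have Hin1 : c \in take i.+1 s1 by rewrite (take_nth 0) ?Hs1 // mem_rcons in_cons eqxx.
have Hnin1 : c \notin take i s1.
  by case: Ht1; rewrite (take_nth 0) ?Hs1 // rcons_uniq => _ /andP[].
have Hin2 : c \in take i.+1 s2.
  have := nth_dword (take i.+1 s1) c; rewrite Hw // nth_dword Hin1 Hsz1 Hsz2 andbT.
  case: (c \in take i.+1 s2); rewrite ?andbF ?andbT //= => H. rewrite orbF Hc orbT in H. move/eqP: H; lia.
have Hnin2 : c \notin take i s2.
  apply/negP => Hc2.
  case: (leqP c i.*2) => Hci.
    have := nth_dword (take i s1) c; rewrite Hw ?(ltnW Hi) // nth_dword Hc2 (negbTE Hnin1).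
    rewrite Hsz1' Hsz2' andbF andbT orbF; lia.
  have := @rp_range i (take i s2) Ht2' c Hc2; lia.
move: Hin2; rewrite (take_nth 0) ?Hs2 // mem_rcons in_cons (negbTE Hnin2) orbF.
by move/eqP.
Qed.

Lemma dyck1_eq P : dyck 1 P -> P = dword [::].
Proof.
case=> Hs Hp H0; case: P Hs Hp H0 => [|a [|b []]] //= _ Hp H0.
have := Hp 1 isT; move: H0; rewrite !hcons !h0 /dword /=.
by case: a {Hp}; case: b => //=; lia.
Qed.

Lemma surj k C : dyck_chain k.+1 C ->
  exists s, rook_placement k s /\ rook_to_chain k.+1 s = C.
Proof.
elim: k C => [|k IH] C [HsC Hd Hc].
- exists [::]; split; first by split.
  case: C HsC Hd {Hc} => [|D [|]] //= _ Hd.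
  by rewrite /rook_to_chain /= -(@dyck1_eq D (Hd 0 isT)).
- pose C' := take k.+1 C.
  have HC' : dyck_chain k.+1 C'.
    split; first by rewrite size_takel // HsC.
    + by move=> i Hi; rewrite nth_take //; apply: Hd; lia.
    + by move=> i Hi; rewrite !nth_take //; [apply: Hc; lia | lia].
  have [s' [Hr' Hrtc]] := IH C' HC'.
  have [Hs' Hu' Hb'] := Hr'.
  have HD : nth [::] C k = dword s'.
    rewrite -(@nth_take k.+1) // -/C' -Hrtc nth_rtc //.
    by rewrite take_oversize // Hs'.
  have [j [Hj Hn HE]] := @flipB (nth [::] C k) (nth [::] C k.+1) k.+1 (ltn0Sn k)
     (Hd k (ltnW (ltnSn _))) (Hd k.+1 (ltnSn _)) (Hc k (ltnSn _)).
  rewrite HD in Hn HE.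
  have Hjs : j \notin s'.
    apply/negP => Hjs; move: Hn; rewrite nth_dword_ff nth_dword Hjs Hs'.
    have := @rp_range k s' Hr' j Hjs; case: (j == 0) => //=; lia.
  exists (rcons s' j); split.
  + split.
    * by rewrite size_rcons Hs'.
    * by rewrite rcons_uniq Hjs.
    * move=> x Hx; rewrite nth_rcons Hs'; case: (ltnP x k) => H1.
        by apply: Hb'.
      have -> : x = k by lia.
      rewrite eqxx; lia.
  + apply: (eq_from_nth (x0 := [::])); first by rewrite size_rtc HsC.
    move=> i; rewrite size_rtc => Hi; rewrite nth_rtc //.
    case: (ltnP i k.+1) => Hik.
      rewrite -cats1 takel_cat ?Hs' //.
      by rewrite -(@nth_rtc k.+1) // Hrtc /C' nth_take.
    have -> : i = k.+1 by lia.
    rewrite take_oversize ?size_rcons ?Hs' // HE dword_rcons //.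
    * by move=> y Hy; rewrite Hs'; apply: (@rp_range k s' Hr' y Hy).
    * by rewrite Hs'.
Qed.

Theorem mainTheorem3 (n : nat) (hn : 1 <= n) :
  (forall s, rook_placement n.-1 s -> dyck_chain n (rook_to_chain n s)) /\
  (forall s1 s2, rook_placement n.-1 s1 -> rook_placement n.-1 s2 ->
     rook_to_chain n s1 = rook_to_chain n s2 -> s1 = s2) /\
  (forall C, dyck_chain n C -> exists s, rook_placement n.-1 s /\ rook_to_chain n s = C).
Proof.
case: n hn => // k _ /=; split; [|split].
- exact: fwd.
- exact: inj.
- exact: surj.
Qed.
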